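(* Let $(X,Y)$ be a random pair with $Y$ real-valued and $\mathbb{E}[Y^2]<\infty$, and let $m^\star(x)=\mathbb{E}[Y\mid X=x]$. Suppose $g^\star(x)=h(m^\star(x))$ for some strictly increasing $h:\mathbb{R}\to\mathbb{R}$. Let $\mathcal{F}$ be the set of nondecreasing functions $f:\mathbb{R}\to\mathbb{R}$, and let $f^\star$ be any minimizer of $\mathbb{E}\big[(Y-f(g^\star(X)))^2\big]$ over $f\in\mathcal{F}$. Then $f^\star(g^\star(X))=m^\star(X)$. *)

(* Defs.v *)
From HB Require Import structures.
From mathcomp Require Import all_boot all_order all_algebra.
From mathcomp Require Import all_classical all_reals all_analysis.
Set Implicit Arguments. Unset Strict Implicit. Unset Printing Implicit Defensive.
Import Order.TTheory GRing.Theory Num.Theory.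
Local Open Scope classical_set_scope.
Local Open Scope ring_scope.

Definition is_cond_exp {d d' : measure_display} {T : measurableType d}
  {S : measurableType d'} {R : realType} (P : probability T R)
  (X : T -> S) (Y : T -> R) (m : S -> R) : Prop :=
  [/\ measurable_fun setT m,
      P.-integrable setT (fun t => (m (X t))%:E) &
      forall A : set S, measurable A ->
        (\int[P]_(t in X @^-1` A) (Y t)%:E =
         \int[P]_(t in X @^-1` A) (m (X t))%:E)%E].

Definition sq_risk {d d' : measure_display} {T : measurableType d}
  {S : measurableType d'} {R : realType} (P : probability T R)
  (X : T -> S) (Y : T -> R) (g : S -> R) (f : R -> R) : \bar R :=
  (\int[P]_t ((Y t - f (g (X t))) ^+ 2)%:E)%E.

(* Main.v *)
Require Import Defs.
From HB Require Import structures.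
From mathcomp Require Import all_boot all_order all_algebra.
From mathcomp Require Import all_classical all_reals all_analysis.
From mathcomp Require Import measurable_realfun simple_functions measurable_fun_approximation.
From mathcomp Require Import ring lra.
Import Order.TTheory GRing.Theory Num.Theory.
Import HBNNSimple numFieldNormedType.Exports.
Set Implicit Arguments. Unset Strict Implicit. Unset Printing Implicit Defensive.
Local Open Scope classical_set_scope.
Local Open Scope ring_scope.

Section clip.
Variable R : realType.
Implicit Types x y N : R.

Definition clip N x : R := if x < - N then - N else if N < x then N else x.

Lemma clip_nd N x y : 0 <= N -> x <= y -> clip N x <= clip N y.
Proof.
rewrite /clip => N0 xy.
case: ifP => h1; case: ifP => h2; try case: ifP => h3; try case: ifP => h4;
  move: h1 h2; try move: h3; try move: h4; rewrite ?ltNge ?negbK; 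
  move=> *; lra.
Qed.

Lemma clip_lip N x y : 0 <= N -> x <= y -> clip N y - clip N x <= y - x.
Proof.
rewrite /clip => N0 xy.
case: ifP => h1; case: ifP => h2; try case: ifP => h3; try case: ifP => h4;
  move: h1 h2; try move: h3; try move: h4; rewrite ?ltNge ?negbK;
  move=> *; lra.
Qed.

Lemma clip_id N x : `|x| <= N -> clip N x = x.
Proof.
rewrite /clip => /ler_normlP [h1 h2].
by rewrite ltNge (_ : - N <= x) /= ?ltNge ?h2 //; lra.
Qed.

Lemma clip_bound N x : 0 <= N -> `|clip N x| <= N.
Proof.
move=> N0; rewrite /clip; apply/ler_normlP.
case: ifP => h1; try case: ifP => h2; move: h1; try move: h2;
  rewrite ?ltNge ?negbK; move=> *; split; lra.
Qed.

Lemma clip_prod N x y : 0 <= N -> 0 <= (x - y) * (clip N x - clip N y).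
Proof.
move=> N0; have [xy|yx] := lerP x y.
  apply: mulr_le0; first lra.
  by have := clip_nd N0 xy; lra.
apply: mulr_ge0; first lra.
by have := clip_nd N0 (ltW yx); lra.
Qed.

Variable h : R -> R.
Hypothesis hh : {homo h : x y / x < y}.

Definition kfun N y : R := sup [set m : R | m = - N \/ (- N <= m <= N /\ h m <= y)].

Lemma kfun_ub N y : 0 <= N ->
  ubound [set m : R | m = - N \/ (- N <= m <= N /\ h m <= y)] N.
Proof. by move=> N0 m [->|[/andP[_ ?] _]] //; lra. Qed.

Lemma kfun_h N z : 0 <= N -> kfun N (h z) = clip N z.
Proof.
move=> N0; rewrite /kfun; set E := (X in sup X).
have cE : E (clip N z).
  rewrite /E /clip /=; case: ifP => h1; first by left.
  right; case: ifP => h2.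
    split; first (apply/andP; split; lra).
    by rewrite le_eqVlt hh ?orbT.
  move: h1 h2 => /negbT; rewrite -leNgt => ? /negbT; rewrite -leNgt => ?.
  by split; [apply/andP; split; lra|].
have ubc : ubound E (clip N z).
  move=> m [->|[/andP[m1 m2] hm]].
    by have := clip_bound z N0; move/ler_normlP => [? ?]; lra.
  have mz : m <= z.
    rewrite leNgt; apply/negP => zm; have := hh zm; lra.
  rewrite /clip; case: ifP => h1; first lra.
  by case: ifP.
apply/le_anti/andP; split; first by apply: ge_sup => //; exists (clip N z).
by apply: ub_le_sup => //; exists (clip N z).
Qed.

Lemma kfun_nd N : 0 <= N -> {homo kfun N : x y / x <= y}.
Proof.
move=> N0 y y' yy; apply: ge_sup; first by exists (- N); left.
move=> m Em; apply: ub_le_sup; first by exists N; exact: kfun_ub.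
case: Em => [->|[m1 m2]]; [by left|right; split => //; lra].
Qed.

Lemma kfun_bound N y : 0 <= N -> `|kfun N y| <= N.
Proof.
move=> N0; apply/ler_normlP; split.
  suff : - N <= kfun N y by lra.
  by apply: ub_le_sup; [exists N; exact: kfun_ub|left].
by apply: ge_sup; [exists (- N); left|exact: kfun_ub].
Qed.
End clip.

Section KL.
Local Open Scope ereal_scope.
Context d d' (T : measurableType d) (S : measurableType d') (R : realType).
Variables (mu : {measure set T -> \bar R}) (X : T -> S).
Hypothesis mX : measurable_fun setT X.
Variables (w : T -> \bar R).
Hypothesis mw : measurable_fun setT w.
Hypothesis w0 : forall t, 0 <= w t.

Lemma KL_simple (h : {nnsfun S >-> R}) :
  \int[mu]_t ((h (X t))%:E * w t) =
  \sum_(r \in range h) r%:E * \int[mu]_(t in X @^-1` (h @^-1` [set r])) w t.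
Proof.
transitivity (\int[mu]_t (\sum_(y \in range h)
    (y * \1_(h @^-1` [set y]) (X t))%:E * w t)).
  apply: eq_integral => t _.
  rewrite -ge0_mule_fsuml => [|y]; last exact: nnfun_muleindic_ge0.
  by rewrite fsumEFin // -(fimfunE _ (X t)).
have mI y : measurable_fun setT (fun t => (\1_(h @^-1` [set y]) (X t) : R)).
  apply: (measurableT_comp (f := \1_(h @^-1` [set y]) : S -> R)) mX.
  apply: measurable_indic; exact: measurable_funPTI.
rewrite ge0_integral_fsum//; first last.
  - by move=> m y _; rewrite mule_ge0 ?w0// nnfun_muleindic_ge0.
  - move=> y; apply: emeasurable_funM => //.
    apply/measurable_EFinP; apply: measurable_funM => //.
apply: eq_fsbigr => r rh.
under eq_integral do rewrite EFinM -muleA.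
rewrite ge0_integralZl//; last 3 first.
- by apply: emeasurable_funM => //; apply/measurable_EFinP.
- by move=> t _; rewrite mule_ge0 ?w0// lee_fin.
- by move: rh; rewrite inE => -[t _ <-]; rewrite lee_fin.
congr (_ * _).
rewrite [RHS]integral_mkcond; apply: eq_integral => t _.
rewrite patchE /= indicE.
have -> : (X t \in h @^-1` [set r]) = (t \in X @^-1` (h @^-1` [set r])) by [].
by case: ifPn => /= hx; rewrite ?mul1e ?mul0e.
Qed.

Lemma KL_lim (w' : T -> R) (mw' : measurable_fun setT w') (w'0 : forall t, (0 <= w' t)%R)
  (phi : S -> \bar R) (mphi : measurable_fun setT phi) (phi0 : forall s, 0 <= phi s) :
  \int[mu]_t (phi (X t) * (w' t)%:E) =
  limn (fun n => \int[mu]_t ((nnsfun_approx measurableT mphi n (X t))%:E * (w' t)%:E)).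
Proof.
set h := nnsfun_approx measurableT mphi.
have fg t : phi (X t) * (w' t)%:E = limn (fun n => (h n (X t))%:E * (w' t)%:E).
  apply/esym/cvg_lim => //; apply: cvgeZr => //.
  exact: cvg_nnsfun_approx.
under eq_integral => t _ do rewrite fg.
apply: monotone_convergence => //.
- move=> n; apply: emeasurable_funM; last exact/measurable_EFinP.
  apply/measurable_EFinP.
  exact: (measurableT_comp (f := h n : S -> R)) mX.
- by move=> n t _; rewrite mule_ge0 ?lee_fin.
- move=> t _ a b ab /=; rewrite lee_wpmul2r ?lee_fin//.
  exact/lefP/nd_nnsfun_approx.
Qed.
End KL.

Section KL2.
Local Open Scope ereal_scope.
Context d d' (T : measurableType d) (S : measurableType d') (R : realType).
Variables (mu : {measure set T -> \bar R}) (X : T -> S).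
Hypothesis mX : measurable_fun setT X.

Lemma KL (w1 w2 : T -> R) : measurable_fun setT w1 -> measurable_fun setT w2 ->
  (forall t, (0 <= w1 t)%R) -> (forall t, (0 <= w2 t)%R) ->
  (forall A, measurable A -> \int[mu]_(t in X @^-1` A) (w1 t)%:E = \int[mu]_(t in X @^-1` A) (w2 t)%:E) ->
  forall phi : S -> \bar R, measurable_fun setT phi -> (forall s, 0 <= phi s) ->
  \int[mu]_t (phi (X t) * (w1 t)%:E) = \int[mu]_t (phi (X t) * (w2 t)%:E).
Proof.
move=> m1 m2 p1 p2 hA phi mphi phi0.
rewrite (KL_lim mu mX m1 p1 mphi phi0) (KL_lim mu mX m2 p2 mphi phi0).
suff suf n : \int[mu]_t ((nnsfun_approx measurableT mphi n (X t))%:E * (w1 t)%:E) =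
  \int[mu]_t ((nnsfun_approx measurableT mphi n (X t))%:E * (w2 t)%:E).
  by under eq_fun do rewrite suf.
rewrite !KL_simple//; try exact/measurable_EFinP.
by apply: eq_fsbigr => r _; rewrite hA//; exact: measurable_funPTI.
Qed.
End KL2.

Section CE.
Context d (T : measurableType d) (R : realType).
Variable (mu : {measure set T -> \bar R}).

Lemma int_bdd_mul (f g : T -> R) M : measurable_fun setT f -> (forall t, `|f t| <= M) ->
  mu.-integrable setT (EFin \o g) -> mu.-integrable setT (fun t => (f t * g t)%:E).
Proof.
move=> mf fM ig.
apply: (@le_integrable _ _ _ mu setT measurableT _ (fun t => (M%:E * (g t)%:E)%E)).
- apply/measurable_EFinP; apply: measurable_funM => //.
  exact/measurable_EFinP/(measurable_int _ ig).
- move=> t _; rewrite -EFinM !abse_EFin lee_fin !normrM.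
  rewrite ler_wpM2r// (le_trans (fM t))// ler_norm//.
- exact: integrableZl.
Qed.

Local Notation Int f := (mu.-integrable setT (EFin \o f)).

Lemma iD (f g : T -> R) : Int f -> Int g ->
  (\int[mu]_t ((f t + g t)%:E) = \int[mu]_t (f t)%:E + \int[mu]_t (g t)%:E)%E.
Proof. by move=> ? ?; under eq_integral do rewrite EFinD; exact: integralD. Qed.

Lemma iB (f g : T -> R) : Int f -> Int g ->
  (\int[mu]_t ((f t - g t)%:E) = \int[mu]_t (f t)%:E - \int[mu]_t (g t)%:E)%E.
Proof. by move=> ? ?; under eq_integral do rewrite EFinB; exact: integralB_EFin. Qed.

Lemma iZl (f : T -> R) c : Int f ->
  (\int[mu]_t ((c * f t)%:E) = c%:E * \int[mu]_t (f t)%:E)%E.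
Proof. by move=> ?; under eq_integral do rewrite EFinM; exact: integralZl. Qed.

Lemma intD (f g : T -> R) : Int f -> Int g -> Int (fun t => f t + g t).
Proof. move=> ? ?; rewrite (_ : _ \o _ = (EFin \o f) \+ (EFin \o g))%E; last by apply/funext => t /=; rewrite EFinD.
exact: integrableD. Qed.

Lemma intB (f g : T -> R) : Int f -> Int g -> Int (fun t => f t - g t).
Proof. move=> ? ?; rewrite (_ : _ \o _ = (EFin \o f) \- (EFin \o g))%E; last by apply/funext => t /=; rewrite EFinB.
exact: integrableB. Qed.

Lemma intZ (f : T -> R) c : Int f -> Int (fun t => c * f t).
Proof. move=> ?; rewrite (_ : _ \o _ = (fun t => c%:E * (EFin \o f) t))%E; last by apply/funext => t /=; rewrite EFinM.
exact: integrableZl. Qed.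

Lemma intN (f : T -> R) : Int f -> Int (Num.norm \o f).
Proof. move=> h.
have -> : (EFin \o (Num.norm \o f)) = (abse \o (EFin \o f))%E by apply/funext => t /=.
exact: integrable_abse. Qed.
End CE.

Section CE2.
Context d d' (T : measurableType d) (S : measurableType d') (R : realType).
Variables (mu : {finite_measure set T -> \bar R}) (X : T -> S).
Hypothesis mX : measurable_fun setT X.
Local Notation Int f := (mu.-integrable setT (EFin \o f)).
Variables Y Z : T -> R.
Hypotheses (iY : Int Y) (iZ : Int Z).
Hypothesis hA : forall A, measurable A ->
  (\int[mu]_(t in X @^-1` A) (Y t)%:E = \int[mu]_(t in X @^-1` A) (Z t)%:E)%E.

Lemma CE_bdd (psi : S -> R) M : measurable_fun setT psi -> 0 <= M ->
  (forall s, `|psi s| <= M) -> (\int[mu]_t (((Y t - Z t) * psi (X t))%:E) = 0)%E.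
Proof.
move=> mpsi M0 psiM.
have mY : measurable_fun setT Y by exact/measurable_EFinP/(measurable_int _ iY).
have mZ : measurable_fun setT Z by exact/measurable_EFinP/(measurable_int _ iZ).
set G := fun t => `|Y t| + `|Z t|.
have iG : Int G by apply: intD; exact: intN.
have mG : measurable_fun setT G by exact/measurable_EFinP/(measurable_int _ iG).
set w1 := fun t => Y t + G t.
set w2 := fun t => Z t + G t.
have w10 t : 0 <= w1 t.
  rewrite /w1 /G; have /ler_normlP[? ?] := lexx `|Y t|; have := normr_ge0 (Z t); lra.
have w20 t : 0 <= w2 t.
  rewrite /w2 /G; have /ler_normlP[? ?] := lexx `|Z t|; have := normr_ge0 (Y t); lra.
have hA' A : measurable A ->
  (\int[mu]_(t in X @^-1` A) (w1 t)%:E = \int[mu]_(t in X @^-1` A) (w2 t)%:E)%E.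
  move=> mA; have mXA : measurable (X @^-1` A) by rewrite -[X @^-1` A]setTI; exact: mX.
  have sub f : Int f -> mu.-integrable (X @^-1` A) (EFin \o f).
    by move=> ?; apply: integrableS (_ : Int f) => //.
  rewrite /w1 /w2; under eq_integral do rewrite EFinD.
  rewrite integralD//; try exact: sub.
  under [RHS]eq_integral do rewrite EFinD.
  by rewrite [RHS]integralD ?hA//; exact: sub.
set phi := fun s => psi s + M.
have mphi : measurable_fun setT phi by apply: measurable_funD.
have phi0 s : 0 <= phi s by rewrite /phi; have /ler_normlP[? ?] := psiM s; lra.
have phiM t : `|phi (X t)| <= M + M.
  by rewrite /phi; have /ler_normlP[? ?] := psiM (X t); apply/ler_normlP; split; lra.
have mphiX : measurable_fun setT (phi \o X) by exact: measurableT_comp.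
have mEphi : measurable_fun setT (EFin \o phi) by exact/measurable_EFinP.
have := @KL _ _ _ _ _ mu X mX w1 w2 (measurable_funD mY mG) (measurable_funD mZ mG) w10 w20 hA'
  (EFin \o phi) mEphi (fun s => phi0 s).
move=> /= hK.
have i1 : Int (fun t => phi (X t) * w1 t) by apply: int_bdd_mul phiM _; [|exact: intD].
have i2 : Int (fun t => phi (X t) * w2 t) by apply: int_bdd_mul phiM _; [|exact: intD].
have e1 : (\int[mu]_t (((Y t - Z t) * phi (X t))%:E) = 0)%E.
  transitivity (\int[mu]_t ((phi (X t) * w1 t - phi (X t) * w2 t)%:E))%E.
    by apply: eq_integral => t _; rewrite /w1 /w2; congr EFin; ring.
  rewrite iB//; under eq_integral do rewrite EFinM; under [X in (_ - X)%E]eq_integral do rewrite EFinM.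
  by rewrite hK subee// integrable_fin_num//; under eq_fun do rewrite -EFinM.
have iYZ : Int (fun t => Y t - Z t) by exact: intB.
transitivity (\int[mu]_t (((Y t - Z t) * phi (X t) - M * (Y t - Z t))%:E))%E.
  by apply: eq_integral => t _; rewrite /phi; congr EFin; ring.
rewrite iB//; last 2 first.
  - rewrite (_ : (fun t => (Y t - Z t) * phi (X t)) = fun t => phi (X t) * (Y t - Z t)).
      exact: int_bdd_mul phiM iYZ.
    by apply/funext => t; rewrite mulrC.
  - exact: intZ.
rewrite e1 iZl// iB// -!(preimage_setT X) hA// subee ?mule0 ?sube0//.
by rewrite (preimage_setT X) integrable_fin_num.
Qed.
End CE2.


Section extra.
Context d (T : measurableType d) (R : realType).
Variable (mu : {finite_measure set T -> \bar R}).
Local Notation Int f := (mu.-integrable setT (EFin \o f)).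

Lemma int_bdd (f : T -> R) M : measurable_fun setT f -> (forall t, `|f t| <= M) -> Int f.
Proof.
move=> mf fM.
apply: (@le_integrable _ _ _ mu setT measurableT _ (EFin \o cst M)).
- exact/measurable_EFinP.
- by move=> t _ /=; rewrite lee_fin (le_trans (fM t)) ?ler_norm.
- exact: finite_measure_integrable_cst.
Qed.

Lemma sq_bound (x : R) : `|x| <= 1 + x ^+ 2.
Proof.
have := sqr_ge0 (`|x| - 1); rewrite -(real_normK (num_real x)).
have := normr_ge0 x; nra.
Qed.

Lemma L2_L1 (f : T -> R) : measurable_fun setT f -> Int (fun t => f t ^+ 2) -> Int f.
Proof.
move=> mf if2.
apply: (@le_integrable _ _ _ mu setT measurableT _ (EFin \o (fun t => 1 + f t ^+ 2))).
- exact/measurable_EFinP.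
- by move=> t _ /=; rewrite lee_fin (le_trans (sq_bound _))// ler_norm.
- apply: intD => //; exact: finite_measure_integrable_cst.
Qed.
End extra.

Theorem theorem3 (d : measure_display) (T : measurableType d) (R : realType)
  (P : probability T R) (d' : measure_display) (S : measurableType d')
  (X : T -> S) (Y : T -> R)
  (hX : measurable_fun setT X) (hY : measurable_fun setT Y)
  (hY2 : P.-integrable setT (fun t => (Y t ^+ 2)%:E))
  (mstar : S -> R) (hm : is_cond_exp P X Y mstar)
  (h : R -> R) (hh : {homo h : x y / x < y})
  (gstar : S -> R) (hg : forall x, gstar x = h (mstar x))
  (fstar : R -> R) (hfF : {homo fstar : x y / x <= y})
  (hfmin : forall f : R -> R, {homo f : x y / x <= y} ->
     (sq_risk P X Y gstar fstar <= sq_risk P X Y gstar f)%E) :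
  {ae P, forall t, fstar (gstar (X t)) = mstar (X t)}.
Proof.
case: hm => mm iZ hA.
pose Z := fun t => mstar (X t).
pose V := fun t => fstar (gstar (X t)).
have mf : measurable_fun setT fstar by apply: nondecreasing_measurable.
have hle : {homo h : x y / x <= y}.
  by move=> x y; rewrite le_eqVlt => /predU1P[->//|/hh/ltW].
have mh : measurable_fun setT h by apply: nondecreasing_measurable.
have gE : gstar = h \o mstar by apply/funext => s; rewrite hg.
have mg : measurable_fun setT gstar by rewrite gE; exact: measurableT_comp.
have mZ : measurable_fun setT Z by exact: measurableT_comp.
have mV : measurable_fun setT V by apply: measurableT_comp => //; exact: measurableT_comp.
have iY : P.-integrable setT (EFin \o Y) by exact: L2_L1 hY hY2.
have iZ' : P.-integrable setT (EFin \o Z) by [].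
pose A := fun t => Y t - V t.
have mA : measurable_fun setT A by exact: measurable_funB.
have iA2 : P.-integrable setT (EFin \o (fun t => A t ^+ 2)).
  apply/integrableP; split.
    by apply/measurable_EFinP; apply: measurable_funX.
  have r0 := hfmin (fun _ => 0) (fun _ _ _ => lexx 0).
  rewrite /sq_risk in r0.
  under eq_integral do rewrite gee0_abs ?lee_fin ?sqr_ge0//.
  apply: (le_lt_trans r0).
  under eq_integral do rewrite subr0.
  have /integrableP[_ H] := hY2; apply: le_lt_trans H.
  have mY2 : measurable_fun setT (fun x => (Y x ^+ 2)%:E) := measurable_int _ hY2.
  apply: ge0_le_integral => //=.
  - by move=> t ?; rewrite lee_fin sqr_ge0.
  - have -> : (fun x => `|Y x ^+ 2|%:E) = (fun x => (Y x ^+ 2)%:E) :> (T -> \bar R).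
      by apply/funext => x; rewrite ger0_norm ?sqr_ge0.
    exact: mY2.
  - by move=> t ?; rewrite ger0_norm ?sqr_ge0.
have iA : P.-integrable setT (EFin \o A) by exact: L2_L1 mA iA2.
have H (n : nat) : ae_eq P setT
    (fun t => ((Z t - V t) * (clip n%:R (Z t) - clip n%:R (V t)))%:E) (cst 0%E).
  pose N : R := n%:R.
  have N0 : 0 <= N by [].
  pose psi := fun s => kfun h N (gstar s) - clip N (fstar (gstar s)).
  have mk : measurable_fun setT (kfun h N) by apply: nondecreasing_measurable => //; exact: kfun_nd.
  have mc : measurable_fun setT (clip N) by apply: nondecreasing_measurable => // x y; exact: clip_nd.
  have mpsi : measurable_fun setT psi.
    apply: measurable_funB; first exact: measurableT_comp.
    by apply: measurableT_comp => //; exact: measurableT_comp.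
  have psiM s : `|psi s| <= N + N.
    apply: (le_trans (ler_normB _ _)); apply: lerD; [exact: kfun_bound|exact: clip_bound].
  pose phi := fun t => psi (X t).
  have mphi : measurable_fun setT phi by exact: measurableT_comp.
  have phiM t : `|phi t| <= N + N by exact: psiM.
  have phiE t : phi t = clip N (Z t) - clip N (V t).
    by rewrite /phi /psi /V /Z hg (kfun_h hh _ N0).
  have iphi : P.-integrable setT (EFin \o phi) by exact: int_bdd mphi phiM.
  have iQ : P.-integrable setT (EFin \o (fun t => phi t * phi t)) by exact: int_bdd_mul mphi phiM iphi.
  have iPA : P.-integrable setT (EFin \o (fun t => phi t * A t)) by exact: int_bdd_mul mphi phiM iA.
  pose b := fine (\int[P]_t ((phi t * A t)%:E)).
  pose q := fine (\int[P]_t ((phi t * phi t)%:E)).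
  pose a := fine (\int[P]_t ((A t ^+ 2)%:E)).
  have bE : (\int[P]_t ((phi t * A t)%:E) = b%:E)%E by rewrite fineK //; exact: (integrable_fin_num measurableT iPA).
  have qE : (\int[P]_t ((phi t * phi t)%:E) = q%:E)%E by rewrite fineK //; exact: (integrable_fin_num measurableT iQ).
  have aE : (\int[P]_t ((A t ^+ 2)%:E) = a%:E)%E by rewrite fineK //; exact: (integrable_fin_num measurableT iA2).
  have key s : 0 < s < 1 -> 2 * b <= s * q.
    move=> /andP[s0 s1].
    pose fs := fun y => fstar y + s * (kfun h N y - clip N (fstar y)).
    have fsnd : {homo fs : x y / x <= y}.
      move=> x y xy; rewrite /fs.
      have h1 := hfF _ _ xy; have h2 := clip_lip N0 (hfF _ _ xy); have h3 : kfun h N x <= kfun h N y by exact: kfun_nd.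
      nra.
    have := hfmin fs fsnd; rewrite /sq_risk.
    have eq t : (Y t - fs (gstar (X t))) ^+ 2 =
        A t ^+ 2 + ((- (2 * s)) * (phi t * A t) + s ^+ 2 * (phi t * phi t)).
      by rewrite /fs /A /phi /psi /V; ring.
    under [X in (_ <= X)%E]eq_integral do rewrite eq.
    rewrite iD//; last by apply: intD; apply: intZ.
    rewrite iD//; try by apply: intZ.
    rewrite !iZl// bE qE.
    rewrite (_ : \int[P]_t ((Y t - fstar (gstar (X t))) ^+ 2)%:E = a%:E)%E //.
    rewrite -!EFinM -!EFinD lee_fin => hle2.
    nra.
  have b0 : b <= 0.
    rewrite leNgt; apply/negP => bpos.
    pose D := `|q| + b + 1.
    have D0 : 0 < D by rewrite /D; have := normr_ge0 q; lra.
    pose s := b / D.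
    have sD : s * D = b by rewrite /s mulfVK // gt_eqF.
    have qq := ler_norm q.
    have s0 : 0 < s by rewrite /s divr_gt0.
    have s1 : s < 1.
      by rewrite -(ltr_pM2r D0) mul1r sD /D; have := normr_ge0 q; lra.
    have := key s; rewrite s0 s1 /= => /(_ isT) k.
    have Dq : `|q| < D by rewrite /D; lra.
    have l1 : s * q <= s * `|q| by rewrite ler_wpM2l // ltW.
    have l2 : s * `|q| < s * D by rewrite ltr_pM2l.
    move: l1 l2 k sD bpos; clear; move=> l1 l2 k sD bpos.
    lra.
  have NN : 0 <= N + N by rewrite addr_ge0.
  have ce := CE_bdd hX iY iZ' hA mpsi NN psiM.
  have iYZ : P.-integrable setT (EFin \o (fun t => phi t * (Y t - Z t))).
    by apply: int_bdd_mul mphi phiM _; exact: intB.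
  have Ege t : 0 <= (Z t - V t) * (clip N (Z t) - clip N (V t)) by exact: clip_prod.
  have EI : (\int[P]_t (((Z t - V t) * (clip N (Z t) - clip N (V t)))%:E) = 0)%E.
    apply/eqP; rewrite eq_le; apply/andP; split; last first.
      by apply: integral_ge0 => t _; rewrite lee_fin.
    rewrite (_ : \int[P]_t _ = \int[P]_t ((phi t * A t - phi t * (Y t - Z t))%:E))%E; last first.
      by apply: eq_integral => t _; rewrite phiE /A /V /Z; congr EFin; ring.
    rewrite iB// bE.
    rewrite (_ : \int[P]_t ((phi t * (Y t - Z t))%:E) = 0)%E ?sube0 ?lee_fin//.
    by rewrite -ce; apply: eq_integral => t _; rewrite mulrC.
  have mE : measurable_fun setT (fun t => ((Z t - V t) * (clip N (Z t) - clip N (V t)))%:E).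
    apply/measurable_EFinP; apply: measurable_funM; first exact: measurable_funB.
    by apply: measurable_funB; exact: measurableT_comp.
  apply/(ae_eq_integral_abs _ measurableT mE).
  by under eq_integral do rewrite gee0_abs ?lee_fin//.
have H' n : \forall t \ae P,
    ((Z t - V t) * (clip n%:R (Z t) - clip n%:R (V t)))%:E = 0%E.
  by apply: filterS (H n) => t /(_ I).
apply: filterS (ae_foralln H') => t Ht.
pose x := `|Z t| + `|V t|.
have x0 : 0 <= x by rewrite addr_ge0.
have := Num.Theory.archi_boundP x0; set n := Num.bound x => xn.
have := Ht n.
have zb : `|Z t| <= n%:R by rewrite ltW // (le_lt_trans _ xn)// lerDl.
have vb : `|V t| <= n%:R by rewrite ltW // (le_lt_trans _ xn)// lerDr.
rewrite (clip_id zb) (clip_id vb) => /eqP; rewrite eqe mulf_eq0 orbb subr_eq0 => /eqP.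
by move=> e; symmetry; exact: e.
Qed.
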